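(* Let $(D,\Sigma)$ be a tropical linear series of rank $r$ on a metric graph $\Gamma$, and let $M$ be its local array at a point $v$ of valence $d\ge2$ (with tangent vectors ordered $\eta_1,\dots,\eta_d$). Then $M$ satisfies (P2'): for any distinct $i,j\in\{1,\dots,d\}$ and every pair of integers $r_i,r_j\ge0$ with $r_i+r_j=r$, there exist $\mathbf z,\mathbf w_1,\dots,\mathbf w_{r_i},\mathbf u_1,\dots,\mathbf u_{r_j}\in M$ such that (a) $w_{1,i}<w_{2,i}<\dots<w_{r_i,i}<z_i$; (b) $u_{1,j}<u_{2,j}<\dots<u_{r_j,j}<z_j$; (c) $u_{k,j}<w_{k',j}$ for all $1\le k\le r_j$ and $1\le k'\le r_i$. Here $w_{k,i}$ denotes the $i$-th coordinate of $\mathbf w_k$, and similarly for the others.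
   Context: A metric graph is obtained from a finite connected graph by identifying each edge with a closed interval of positive length. $T_v(\Gamma)$ is the set of outgoing tangent directions and the valence is $|T_v(\Gamma)|$. $\mathrm{sl}_\eta(f)$ is the outgoing slope of a continuous piecewise linear integer-slope function. We set $\mathrm{div}(f)=\sum_v(-\sum_{\eta\in T_v}\mathrm{sl}_\eta(f))v$ and $R(D)=\{f:D+\mathrm{div}(f)\ge0\}$ for a divisor $D$. A tropical linear series of rank $r$ is $(D,\Sigma)$ with $\Sigma\subseteq R(D)$ a finitely generated tropical submodule (closed under $\min\{f_i+a_i\}$, $a_i\in\mathbb R$) such that: (1) every effective divisor $E$ of degree $r$ admits $f\in\Sigma$ with $\mathrm{div}(f)+D\ge E$; (2) every $r+2$ functions of $\Sigma$ are tropically dependent (some $\min_i(f_i+a_i)$ is attained at least twice at every point). For such a series every slope set $\{\mathrm{sl}_\eta(f):f\in\Sigma\}$ has exactly $r+1$ elements $s_\eta[0]<\dots<s_\eta[r]$. The local array at $v$ is $M=\{\mathbf x\in[r]^d:\exists f\in\Sigma,\ \mathrm{sl}_{\eta_i}(f)=s_{\eta_i}[x_i]\ \forall i\}$, where $[r]=\{0,\dots,r\}$. *)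

(* Defs.v *)
From HB Require Import structures.
From mathcomp Require Import all_boot all_order all_algebra.
From mathcomp Require Import reals.
Set Implicit Arguments. Unset Strict Implicit. Unset Printing Implicit Defensive.
Import Order.TTheory GRing.Theory Num.Theory.
Local Open Scope ring_scope.

(* A metric graph: a finite connected graph (loops and multiple edges
   allowed) with each edge e identified with the interval [0, len e],
   parameter 0 at src e and parameter len e at tgt e. *)
Record mgraph (R : realType) := MGraph {
  mg_V : finType;
  mg_E : finType;
  mg_src : mg_E -> mg_V;
  mg_tgt : mg_E -> mg_V;
  mg_len : mg_E -> R;
  mg_len_gt0 : forall e, 0 < mg_len e;
  mg_connected : forall u w : mg_V,
    connect (fun a b : mg_V => [exists e, ((mg_src e == a) && (mg_tgt e == b))
                                     || ((mg_src e == b) && (mg_tgt e == a))]) u w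
}.

Arguments mg_src {R} m _ : rename.
Arguments mg_tgt {R} m _ : rename.
Arguments mg_len {R} m _ : rename.

Section MetricGraph.
Variables (R : realType) (G : mgraph R).

(* Points: a vertex [inl v], or an interior point [inr (e, t)] with
   0 < t < len e (other [inr] values are junk, excluded by [valid]). *)
Definition gpt := (mg_V G + (mg_E G * R))%type.

Definition valid (p : gpt) : bool :=
  match p with
  | inl _ => true
  | inr (e, t) => (0 < t) && (t < mg_len G e)
  end.

(* Tangent directions: (e, false) = along e in the direction of increasing
   parameter, (e, true) = along e in the direction of decreasing parameter. *)
Definition dir := (mg_E G * bool)%type.

Definition tdir (p : gpt) : pred dir := fun eta =>
  match p with
  | inl v => if eta.2 then mg_tgt G eta.1 == v else mg_src G eta.1 == v
  | inr (e, _) => eta.1 == e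
  end.

Definition valence (p : gpt) : nat := #|[pred eta | tdir p eta]|.

(* Real-valued functions on Gamma (only values at valid points matter). *)
Definition tfun := gpt -> R.

Definition edgev (f : tfun) (e : mg_E G) (t : R) : R :=
  if t == 0 then f (inl (mg_src G e))
  else if t == mg_len G e then f (inl (mg_tgt G e))
  else f (inr (e, t)).

(* the parameter (on edge eta.1) of the point p from which eta emanates *)
Definition bpar (p : gpt) (eta : dir) : R :=
  match p with
  | inl _ => if eta.2 then mg_len G eta.1 else 0
  | inr (_, t) => t
  end.

Definition has_slope (f : tfun) (p : gpt) (eta : dir) (s : int) : Prop :=
  exists2 eps : R, 0 < eps &
    forall h : R, 0 < h -> h < eps ->
      edgev f eta.1 (bpar p eta + (if eta.2 then - h else h))
      = edgev f eta.1 (bpar p eta) + s%:~R * h.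

Definition is_PL (f : tfun) : Prop :=
  forall e : mg_E G, exists (n : nat) (a : nat -> R) (s : nat -> int),
    [/\ a 0%N = 0, a n = mg_len G e,
        (forall k, (k < n)%N -> a k < a k.+1) &
        forall k t, (k < n)%N -> a k <= t <= a k.+1 ->
          edgev f e t = edgev f e (a k) + (s k)%:~R * (t - a k)].

Definition div_at (f : tfun) (p : gpt) (k : int) : Prop :=
  exists s : dir -> int,
    (forall eta, tdir p eta -> has_slope f p eta (s eta)) /\
    k = - \sum_(eta | tdir p eta) s eta.

Definition divisor := gpt -> int.

Definition is_divisor (D : divisor) : Prop :=
  exists l : seq gpt, forall p, valid p -> D p != 0 -> p \in l.

Definition in_RD (D : divisor) (f : tfun) : Prop :=
  is_PL f /\ forall p, valid p -> exists2 k, div_at f p k & 0 <= D p + k.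

Definition agree (f g : tfun) : Prop := forall p, valid p -> f p = g p.

Definition tcomb (n : nat) (g : 'I_n.+1 -> tfun) (a : 'I_n.+1 -> R) : tfun :=
  fun p => \big[Order.min/(g ord0 p + a ord0)]_(i < n.+1) (g i p + a i).

Definition fg_tsubmodule (S : tfun -> Prop) : Prop :=
  exists (n : nat) (g : 'I_n.+1 -> tfun),
    (forall i, S (g i)) /\
    forall f, S f <-> exists a : 'I_n.+1 -> R, agree f (tcomb g a).

(* multiplicity at p of the effective divisor ps_1 + ... + ps_r *)
Definition mult (r : nat) (ps : 'I_r -> gpt) (p : gpt) : nat :=
  (\sum_(i < r) (ps i == p))%N.

Definition tdependent (m : nat) (f : 'I_m -> tfun) : Prop :=
  exists a : 'I_m -> R, forall p, valid p ->
    exists i j : 'I_m, [/\ i != j,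
      (forall k, f i p + a i <= f k p + a k) &
      f j p + a j = f i p + a i].

Definition tls (D : divisor) (S : tfun -> Prop) (r : nat) : Prop :=
  [/\ is_divisor D,
      fg_tsubmodule S,
      (forall f, S f -> in_RD D f),
      (forall ps : 'I_r -> gpt, (forall i, valid (ps i)) ->
         exists2 f, S f & forall p, valid p ->
           exists2 k, div_at f p k & ((mult ps p)%:Z <= D p + k)) &
      (forall f : 'I_(r + 2) -> tfun, (forall i, S (f i)) -> tdependent f)].

Definition slopeset (S : tfun -> Prop) (p : gpt) (eta : dir) : int -> Prop :=
  fun s => exists2 f, S f & has_slope f p eta s.

(* s = s_eta[k]: s is the k-th smallest element (from 0) of the set SS *)
Definition kth (SS : int -> Prop) (k : nat) (s : int) : Prop :=
  SS s /\ exists l : seq int,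
    [/\ uniq l, size l = k & forall t, t \in l <-> (SS t /\ t < s)].

Definition local_array (S : tfun -> Prop) (r : nat) (p : gpt) (d : nat)
    (eta : 'I_d -> dir) (x : 'I_d -> 'I_r.+1) : Prop :=
  exists2 f, S f & forall i, exists2 s, has_slope f p (eta i) s &
    kth (slopeset S p (eta i)) (x i) s.

End MetricGraph.

Arguments local_array {R G} S r p {d} eta x.

Definition P2' (r d : nat) (M : ('I_d -> 'I_r.+1) -> Prop) : Prop :=
  forall i j : 'I_d, i != j -> forall ri rj : nat, (ri + rj)%N = r ->
    exists (z : 'I_d -> 'I_r.+1) (w : 'I_ri -> 'I_d -> 'I_r.+1)
           (u : 'I_rj -> 'I_d -> 'I_r.+1),
      [/\ M z /\ (forall k, M (w k)) /\ (forall k, M (u k)),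
          ((forall k k' : 'I_ri, (k < k')%N -> (w k i < w k' i)%N)
                    /\ (forall k, (w k i < z i)%N)),
          ((forall k k' : 'I_rj, (k < k')%N -> (u k j < u k' j)%N)
                    /\ (forall k, (u k j < z j)%N)) &
          forall (k : 'I_rj) (k' : 'I_ri), (u k j < w k' j)%N].

(* Main.v *)
Require Import Defs.
From HB Require Import structures.
From mathcomp Require Import all_boot all_order all_algebra.
From mathcomp Require Import reals boolp.
From mathcomp Require Import ring lra zify.
Import Order.TTheory GRing.Theory Num.Theory.
Local Open Scope ring_scope.


Lemma pigeon (R : realType) (T : finType) (eps : R) (P : T -> R -> Prop) :
  0 < eps -> (forall h, 0 < h -> h < eps -> exists m, P m h) ->
  (forall m h h', P m h -> P m h' -> h = h') -> False.
Proof.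
move=> e0 ex uni.
pose hs (t : 'I_(#|T|.+1)) : R := eps / (t.+2)%:R.
have hsP t : 0 < hs t /\ hs t < eps.
  split; first by rewrite divr_gt0 // ltr0n.
  by rewrite /hs ltr_pdivrMr ?ltr0n // ltr_pMr // ltr1n.
have [f Hf] := boolp.choice (fun t => ex (hs t) (proj1 (hsP t)) (proj2 (hsP t))).
have inj : injective f.
  move=> t t' e; have H1 := Hf t; rewrite e in H1.
  have := uni _ _ _ H1 (Hf t'); rewrite /hs => /(mulfI (lt0r_neq0 e0)) /invr_inj.
  by move/eqP; rewrite eqr_nat => /eqP [] /val_inj.
by have := leq_card f inj; rewrite !card_ord ltnn.
Qed.

Lemma L1 (R : realType) (T : finType) (c : T -> R) (tau : T -> int) (F : R -> R) (eps : R) (s : int) :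
  0 < eps ->
  (forall h, 0 <= h -> h < eps -> (forall m, F h <= c m + (tau m)%:~R * h) /\ exists m, F h = c m + (tau m)%:~R * h) ->
  (forall h, 0 < h -> h < eps -> F h = F 0 + s%:~R * h) ->
  (exists m, c m = F 0 /\ tau m = s) /\ (forall m, c m = F 0 -> (s <= tau m)%R).
Proof.
move=> e0 rep sl; split; last first.
  move=> m cm; have h0 : 0 < eps/2 by rewrite divr_gt0.
  have h1 : eps/2 < eps by lra.
  have [le _] := rep (eps/2) (ltW h0) h1; have := le m; rewrite sl // cm => H.
  rewrite -(ler_int R); nra.
case: (pselect (exists m, c m = F 0 /\ tau m = s)) => // nex; exfalso.
apply: (@pigeon R T eps (fun m h => c m + (tau m)%:~R * h = F 0 + s%:~R * h /\ tau m != s) e0).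
- move=> h h0 h1; have [_ [m Hm]] := rep h (ltW h0) h1; exists m.
  rewrite -sl // Hm; split=> //; apply/eqP => ts; apply: nex; exists m; split=> //.
  move: Hm; rewrite sl // ts; lra.
- move=> m h h' [E1 n1] [E2 n2].
  have : ((tau m)%:~R - s%:~R) * (h - h') = 0 :> R by lra.
  move/eqP; rewrite mulf_eq0 => /orP [|]; last by rewrite subr_eq0 => /eqP.
  by rewrite subr_eq0 eqr_int (negbTE n1).
Qed.

Lemma bigmin_seq (R : realType) (I : eqType) (s : seq I) (F : I -> R) (x0 : R) :
  (\big[Order.min/x0]_(i <- s) F i <= x0)%O /\
  (forall i, i \in s -> (\big[Order.min/x0]_(i <- s) F i <= F i)%O) /\
  (\big[Order.min/x0]_(i <- s) F i = x0 \/ exists2 i, i \in s & \big[Order.min/x0]_(i <- s) F i = F i).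
Proof.
elim: s => [|a s [IH1 [IH2 IH3]]]; first by rewrite big_nil; split=> //; split=> //; left.
rewrite big_cons; split; first by rewrite ge_min IH1 orbT.
split.
  move=> i; rewrite inE => /orP [/eqP ->|iS]; first by rewrite ge_min lexx.
  by rewrite ge_min IH2 ?orbT.
rewrite /Order.min; case: ifP => _; first by right; exists a => //; rewrite inE eqxx.
case: IH3 => [->|[i iS ->]]; first by left.
by right; exists i => //; rewrite inE iS orbT.
Qed.

Lemma bigmin_ord (R : realType) (n : nat) (F : 'I_n.+1 -> R) :
  (forall m, \big[Order.min/F ord0]_(i < n.+1) F i <= F m) /\
  exists m, \big[Order.min/F ord0]_(i < n.+1) F i = F m.
Proof.
have [_ [H2 H3]] := bigmin_seq R _ (index_enum 'I_n.+1) F (F ord0).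
split; first by move=> m; apply: H2; rewrite mem_index_enum.
by case: H3 => [->|[i _ ->]]; [exists ord0|exists i].
Qed.

Lemma fin_eps (R : realType) (T : finType) (Q : T -> R -> Prop) :
  (forall t, exists e, 0 < e /\ Q t e) ->
  (forall t e e', Q t e -> 0 < e' -> e' <= e -> Q t e') ->
  exists e, 0 < e /\ forall t, Q t e.
Proof.
move=> ex dn.
suff [e [e0 He]] : exists e, 0 < e /\ forall t, t \in enum T -> Q t e.
  by exists e; split=> // t; apply: He; rewrite mem_enum.
elim: (enum T) => [|a s [e [e0 He]]]; first by exists 1; split.
have [e' [e'0 He']] := ex a.
exists (Order.min e e'); split; first by rewrite lt_min e0 e'0.
move=> t; rewrite inE => /orP [/eqP ->|ts].
  by apply: dn He' _ _; rewrite ?lt_min ?e0 ?e'0 // ge_min lexx orbT.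
by apply: dn (He t ts) _ _; rewrite ?lt_min ?e0 ?e'0 // ge_min lexx.
Qed.

Section Geo.
Variables (R : realType) (G : mgraph R) (p : gpt G).
Hypothesis vp : valid p.

Definition ept (e : mg_E G) (t : R) : gpt G :=
  if t == 0 then inl (mg_src G e) else if t == mg_len G e then inl (mg_tgt G e) else inr (e, t).

Lemma edgevE (f : tfun G) e t : edgev f e t = f (ept e t).
Proof. by rewrite /edgev /ept; case: ifP => //; case: ifP. Qed.

Definition sh (et : dir G) (h : R) : R := bpar p et + (if et.2 then - h else h).
Definition Phi (f : tfun G) (et : dir G) (h : R) := edgev f et.1 (sh et h).
Definition ptd (et : dir G) (h : R) : gpt G := inr (et.1, sh et h).
Definition dist (et : dir G) : R :=
  match p with inl _ => mg_len G et.1 | inr (_, t) => Order.min t (mg_len G et.1 - t) end.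

Lemma dist_gt0 et : tdir p et -> 0 < dist et.
Proof.
rewrite /dist; case: p vp => [v|[e t]] /=; first by rewrite mg_len_gt0.
by move=> /andP [t0 tl] /eqP ->; rewrite lt_min t0 subr_gt0 tl.
Qed.

Lemma sh_in et h : tdir p et -> 0 < h -> h < dist et ->
  0 < sh et h /\ sh et h < mg_len G et.1.
Proof.
rewrite /sh /dist /bpar; case: p vp => [v|[e t]] /=.
  by move=> _ _ h0 hl; case: et.2; split; lra.
move=> /andP [t0 tl] /eqP E h0; rewrite lt_min E => /andP [h1 h2].
by case: et.2; split; lra.
Qed.

Lemma ptd_valid et h : tdir p et -> 0 < h -> h < dist et -> valid (ptd et h).
Proof. by move=> te h0 h1; have [a b] := sh_in _ _ te h0 h1; rewrite /= a b. Qed.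

Lemma Phi_pt f et h : tdir p et -> 0 < h -> h < dist et -> Phi f et h = f (ptd et h).
Proof.
move=> te h0 h1; have [a b] := sh_in _ _ te h0 h1.
by rewrite /Phi edgevE /ept (gt_eqF a) (lt_eqF b).
Qed.

Lemma Phi0' f et : Phi f et 0 = edgev f et.1 (bpar p et).
Proof. by rewrite /Phi /sh; case: et.2; rewrite ?oppr0 addr0. Qed.

Lemma Phi0 f et : tdir p et -> Phi f et 0 = f p.
Proof.
rewrite Phi0' /edgev /bpar; case: p vp => [v|[e t]] /=.
  move=> _; case: et.2 => /eqP <-; last by rewrite eqxx.
  by rewrite (gt_eqF (mg_len_gt0 _)) eqxx.
by move=> /andP [t0 tl] /eqP ->; rewrite (gt_eqF t0) (lt_eqF tl).
Qed.

Lemma ptd_inj et h h' : ptd et h = ptd et h' -> h = h'.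
Proof. by rewrite /ptd /sh => -[]; case: et.2 => /addrI //; apply: oppr_inj. Qed.

Lemma slope_p f et s : has_slope f p et s ->
  exists2 eps, 0 < eps & forall h, 0 < h -> h < eps -> Phi f et h = Phi f et 0 + s%:~R * h.
Proof. by case=> eps e0 H; exists eps => // h h0 h1; rewrite Phi0' -H. Qed.

Lemma slope_fwd f et h s : has_slope f (ptd et h) et s ->
  exists2 eps, 0 < eps & forall h', 0 < h' -> h' < eps -> Phi f et (h + h') = Phi f et h + s%:~R * h'.
Proof.
case=> eps e0 H; exists eps => // h' h0 h1; have := H h' h0 h1.
rewrite /Phi /= => <-; congr edgev; rewrite /sh; case: et.2; ring.
Qed.

Lemma slope_bwd f et h s : has_slope f (ptd et h) (et.1, ~~ et.2) s ->
  exists2 eps, 0 < eps & forall h', 0 < h' -> h' < eps -> Phi f et (h - h') = Phi f et h + s%:~R * h'.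
Proof.
case=> eps e0 H; exists eps => // h' h0 h1; have := H h' h0 h1.
rewrite /Phi /= => <-; congr edgev; rewrite /sh; case: et.2 => /=; ring.
Qed.

Lemma sum_dir (e : mg_E G) (s : dir G -> int) :
  \sum_(x : dir G | x.1 == e) s x = s (e, false) + s (e, true).
Proof.
rewrite (bigD1 (e, false)) //= (bigD1 (e, true)); last by rewrite /= xpair_eqE eqxx.
rewrite /= big1 ?addr0 //.
move=> [x b] /=; case: b; rewrite !xpair_eqE; case: eqP => //= _; rewrite ?andbF ?andbT /=.
Qed.

End Geo.
Arguments ept {R G}.
Arguments sh {R G}.
Arguments Phi {R G}.
Arguments ptd {R G}.
Arguments dist {R G}.
Arguments slope_fwd {R G p f et h s}.
Arguments slope_p {R G p f et s}.
Arguments Phi_pt {R G p} vp {f et h}.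
Arguments ptd_valid {R G p} vp {et h}.
Arguments dist_gt0 {R G p} vp {et}.
Arguments Phi0 {R G p} vp {f et}.
Arguments slope_bwd {R G p f et h s}.

Section Gen.
Variables (R : realType) (G : mgraph R) (p : gpt G).
Hypothesis vp : valid p.
Variables (n : nat) (g : 'I_n.+1 -> tfun G) (et : dir G) (sg : 'I_n.+1 -> int) (eps : R).
Hypotheses (te : tdir p et) (e0 : 0 < eps) (edist : eps <= dist p et)
  (Hg : forall m h, 0 < h -> h < eps -> Phi p (g m) et h = g m p + (sg m)%:~R * h).

Lemma Rep (a : 'I_n.+1 -> R) (f : tfun G) : agree f (tcomb g a) ->
  forall h, 0 <= h -> h < eps ->
   (forall m, Phi p f et h <= (g m p + a m) + (sg m)%:~R * h) /\
   exists m, Phi p f et h = (g m p + a m) + (sg m)%:~R * h.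
Proof.
move=> ag h; rewrite le_eqVlt => /orP [/eqP <-|h0] h1.
  rewrite Phi0 // ag // /tcomb; have [B1 [m B2]] := @bigmin_ord R n (fun i => g i p + a i).
  by split; [move=> m'; rewrite mulr0 addr0|exists m; rewrite mulr0 addr0].
have hd : h < dist p et by apply: lt_le_trans edist.
rewrite Phi_pt // ag ?ptd_valid // /tcomb.
have [B1 [m B2]] := @bigmin_ord R n (fun i => g i (ptd p et h) + a i).
split; first by move=> m'; rewrite -addrA (addrC (a m')) addrA -Hg // Phi_pt.
by exists m; rewrite B2 -addrA (addrC (a m)) addrA -Hg // Phi_pt.
Qed.

Lemma slope_gen (a : 'I_n.+1 -> R) (f : tfun G) s : agree f (tcomb g a) ->
  has_slope f p et s -> exists m, g m p + a m = f p /\ sg m = s.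
Proof.
move=> ag /slope_p [e1 e1p H1].
have := @L1 R _ (fun m => g m p + a m) sg (Phi p f et) (Order.min eps e1) s.
rewrite lt_min e0 e1p => /(_ isT) [].
- move=> h h0; rewrite lt_min => /andP [h1 _]; exact: Rep.
- by move=> h h0; rewrite lt_min => /andP [_ h1]; apply: H1.
by move=> [m [E1 E2]] _; exists m; rewrite E1 Phi0.
Qed.

Lemma slope_gen_min (a : 'I_n.+1 -> R) (f : tfun G) s : agree f (tcomb g a) ->
  has_slope f p et s -> forall m, g m p + a m = f p -> s <= sg m.
Proof.
move=> ag /slope_p [e1 e1p H1].
have := @L1 R _ (fun m => g m p + a m) sg (Phi p f et) (Order.min eps e1) s.
rewrite lt_min e0 e1p => /(_ isT) [].
- move=> h h0; rewrite lt_min => /andP [h1 _]; exact: Rep.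
- by move=> h h0; rewrite lt_min => /andP [_ h1]; apply: H1.
by move=> _ H m E; apply: H; rewrite E Phi0.
Qed.

Lemma drop (a : 'I_n.+1 -> R) (f : tfun G) h K : agree f (tcomb g a) ->
  0 < h -> h < eps -> div_at f (ptd p et h) K -> (1 <= K)%R ->
  exists lo hi, [/\ g lo p + a lo + (sg lo)%:~R * h = Phi p f et h,
                    g hi p + a hi + (sg hi)%:~R * h = Phi p f et h &
                    (sg lo + 1 <= sg hi)%R].
Proof.
move=> ag h0 h1 [s [Hs ->]] HK.
have E : \sum_(x | tdir (ptd p et h) x) s x = s (et.1, false) + s (et.1, true).
  by rewrite -sum_dir.
have Hf : has_slope f (ptd p et h) et (s et) by apply: Hs; rewrite /= eqxx.
have Hb : has_slope f (ptd p et h) (et.1, ~~ et.2) (s (et.1, ~~ et.2)) by apply: Hs; rewrite /= eqxx.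
have [e1 e1p H1] := slope_fwd Hf.
have [e2 e2p H2] := slope_bwd Hb.
have P1 : 0 < Order.min e1 (eps - h) by rewrite lt_min e1p subr_gt0 h1.
have P2 : forall h', 0 <= h' -> h' < Order.min e1 (eps - h) ->
   (forall m, Phi p f et (h + h') <= (g m p + a m + (sg m)%:~R * h) + (sg m)%:~R * h') /\
   exists m, Phi p f et (h + h') = (g m p + a m + (sg m)%:~R * h) + (sg m)%:~R * h'.
  move=> h' h'0; rewrite lt_min => /andP [_ h'1].
  have hx : h + h' < eps by lra.
  have [B1 [m B2]] := Rep _ _ ag _ (addr_ge0 (ltW h0) h'0) hx.
  split; first by move=> m'; have := B1 m'; rewrite mulrDr addrA.
  by exists m; rewrite B2 mulrDr addrA.
have P3 : forall h', 0 < h' -> h' < Order.min e1 (eps - h) ->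
   Phi p f et (h + h') = Phi p f et (h + 0) + (s et)%:~R * h'.
  by move=> h' h'0; rewrite lt_min addr0 => /andP [h'1 _]; apply: H1.
have [[lo [Elo Slo]] _] := @L1 R _ (fun m => g m p + a m + (sg m)%:~R * h) sg
   (fun h' => Phi p f et (h + h')) (Order.min e1 (eps - h)) (s et) P1 P2 P3.
have Q1 : 0 < Order.min e2 h by rewrite lt_min e2p h0.
have Q2 : forall h', 0 <= h' -> h' < Order.min e2 h ->
   (forall m, Phi p f et (h - h') <= (g m p + a m + (sg m)%:~R * h) + (- sg m)%:~R * h') /\
   exists m, Phi p f et (h - h') = (g m p + a m + (sg m)%:~R * h) + (- sg m)%:~R * h'.
  move=> h' h'0; rewrite lt_min => /andP [_ h'1].
  have hh0 : 0 <= h - h' by lra.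
  have hh1 : h - h' < eps by lra.
  have [B1 [m B2]] := Rep _ _ ag _ hh0 hh1.
  split; first by move=> m'; have := B1 m'; rewrite intrN mulrBr; lra.
  by exists m; rewrite B2 intrN; ring.
have Q3 : forall h', 0 < h' -> h' < Order.min e2 h ->
   Phi p f et (h - h') = Phi p f et (h - 0) + (s (et.1, ~~ et.2))%:~R * h'.
  by move=> h' h'0; rewrite lt_min subr0 => /andP [h'1 _]; apply: H2.
have [[hi [Ehi Shi]] _] := @L1 R _ (fun m => g m p + a m + (sg m)%:~R * h) (fun m => - sg m)
   (fun h' => Phi p f et (h - h')) (Order.min e2 h) (s (et.1, ~~ et.2)) Q1 Q2 Q3.
exists lo, hi; split.
- by rewrite Elo /= addr0.
- by rewrite Ehi /= subr0.
move: HK; rewrite E; case: et Slo Shi E => ee bb /= Slo Shi _.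
rewrite Slo -(opprK (sg hi)) Shi.
by move: Slo Shi => _ _; case: bb => /=; lia.
Qed.

End Gen.
Arguments Rep {R G p} vp {n g et sg eps} te edist Hg {a f}.
Arguments slope_gen {R G p} vp {n g et sg eps} te e0 edist Hg {a f s}.
Arguments slope_gen_min {R G p} vp {n g et sg eps} te e0 edist Hg {a f s}.
Arguments drop {R G p} vp {n g et sg eps} te e0 edist Hg {a f h K}.

Section Slopes.
Variables (R : realType) (G : mgraph R) (p : gpt G).
Hypothesis vp : valid p.
Variables (n : nat) (g : 'I_n.+1 -> tfun G) (et : dir G) (sg : 'I_n.+1 -> int) (eps : R).
Hypotheses (te : tdir p et) (e0 : 0 < eps) (edist : eps <= dist p et)
  (Hg : forall m h, 0 < h -> h < eps -> Phi p (g m) et h = g m p + (sg m)%:~R * h).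
Variables (S : tfun G -> Prop) (r : nat).
Hypotheses (Sg : forall f, S f <-> exists a, agree f (tcomb g a)) (gS : forall m, S (g m))
  (Hgs : forall m, has_slope (g m) p et (sg m))
  (dep : forall f : 'I_(r + 2) -> tfun G, (forall i, S (f i)) -> tdependent f).

Definition V := undup [seq sg m | m <- enum 'I_n.+1].
Definition lst (s : int) := [seq v <- V | (v < s)%R].
Definition idx (s : int) := size (lst s).

Lemma inV m : sg m \in V.
Proof. by rewrite mem_undup; apply: map_f; rewrite mem_enum. Qed.

Lemma slopesetV t : slopeset S p et t <-> t \in V.
Proof.
split.
  case=> f /Sg [a ag] hs; have [m [_ <-]] := slope_gen vp te e0 edist Hg ag hs.
  exact: inV.
rewrite mem_undup => /mapP [m _ ->]; exists (g m) => //.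
Qed.

Lemma idx_lt s s' : s \in V -> s' \in V -> (s < s')%R -> (idx s < idx s')%N.
Proof.
move=> sV s'V ss'; rewrite /idx.
have U : uniq (s :: lst s).
  rewrite /= filter_uniq ?undup_uniq // andbT mem_filter ltxx //.
have := uniq_leq_size U; apply.
move=> x; rewrite inE mem_filter => /orP [/eqP ->|/andP [xs xV]].
  by rewrite mem_filter ss' sV.
by rewrite mem_filter xV (lt_trans xs ss').
Qed.

Lemma V_size : (size V <= r.+1)%N.
Proof.
rewrite leqNgt; apply/negP => big.
pose mt (t : 'I_(r + 2)) : 'I_n.+1 := odflt ord0 [pick m | sg m == nth 0%R V t].
have mtP (t : 'I_(r + 2)) : sg (mt t) = nth 0%R V t.
  rewrite /mt; case: pickP => [m /eqP //|none].
  have : nth 0%R V t \in V by rewrite mem_nth // (leq_trans (ltn_ord t)) // addn2.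
  by rewrite mem_undup => /mapP [m _ E]; have := none m; rewrite E eqxx.
have [a Ha] := dep (fun t => g (mt t)) (fun t => gS (mt t)).
apply: (@pigeon R _ eps (fun ij h => ij.1 != ij.2 /\
   g (mt ij.1) p + a ij.1 + (sg (mt ij.1))%:~R * h =
   g (mt ij.2) p + a ij.2 + (sg (mt ij.2))%:~R * h) e0).
- move=> h h0 h1; have hd : h < dist p et by apply: lt_le_trans edist.
  have [i [j [ij Hmin Hij]]] := Ha _ (ptd_valid vp te h0 hd).
  exists (i, j); split => //=.
  move: Hij; rewrite -!Phi_pt // !Hg //.
  by move=> H; rewrite (addrC (g (mt i) p)) (addrC (g (mt j) p)) -!addrA; lra.
- move=> [i j] h h' /= [ij E1] [_ E2].
  have : ((sg (mt i))%:~R - (sg (mt j))%:~R) * (h - h') = 0 :> R by lra.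
  move/eqP; rewrite mulf_eq0 => /orP [|]; last by rewrite subr_eq0 => /eqP.
  rewrite subr_eq0 eqr_int !mtP nth_uniq ?undup_uniq //.
  + by move=> /eqP/val_inj E; move: ij; rewrite E eqxx.
  + by rewrite (leq_trans (ltn_ord i)) // addn2.
  + by rewrite (leq_trans (ltn_ord j)) // addn2.
Qed.

Lemma idx_le s : s \in V -> (idx s <= r)%N.
Proof.
move=> sV; rewrite -ltnS; apply: leq_trans V_size.
have U : uniq (s :: lst s).
  by rewrite /= filter_uniq ?undup_uniq // andbT mem_filter ltxx.
have := uniq_leq_size U; apply.
by move=> x; rewrite inE mem_filter => /orP [/eqP ->|/andP [_ ->]].
Qed.

Lemma kth_lem s : s \in V -> kth (slopeset S p et) (idx s) s.
Proof.
move=> sV; split; first by apply/slopesetV.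
exists (lst s); split=> //; first by rewrite filter_uniq ?undup_uniq.
by move=> t; rewrite mem_filter slopesetV; split => [/andP [-> ->]|[-> ->]].
Qed.

End Slopes.

Lemma safe (R : realType) (G : mgraph R) (p : gpt G) (l : seq (gpt G)) (et : dir G) :
  exists e : R, 0 < e /\ forall h, 0 < h -> h < e -> ptd p et h \notin l.
Proof.
elim: l => [|q l [e [e0 He]]]; first by exists 1; split.
case: (pselect (exists h, 0 < h /\ ptd p et h = q)) => [[h1 [h10 E]]|nE].
  exists (Order.min e h1); split; first by rewrite lt_min e0 h10.
  move=> h h0; rewrite lt_min => /andP [he hh1]; rewrite inE negb_or He // andbT.
  apply/eqP => E'; have := ptd_inj _ _ _ _ _ _ (etrans E' (esym E)) => hh.
  by move: hh1; rewrite hh ltxx.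
exists e; split => // h h0 he; rewrite inE negb_or He // andbT.
by apply/eqP => E'; apply: nE; exists h.
Qed.

Lemma ord_lo (R : realType) (a b cm cm' chi Fa Fb sm sm' shi : R) :
  a < b -> cm + sm * a = Fa -> Fa <= chi + shi * a -> cm' + sm' * b = Fb ->
  chi + shi * b = Fb -> sm' + 1 <= shi -> Fb <= cm + sm * b -> sm' < sm.
Proof.
move=> ab E1 L1 E2 E3 D L2; rewrite ltNge; apply/negP => H.
have : 0 <= (shi - sm - 1) * (b - a) by apply: mulr_ge0; lra.
nra.
Qed.

Lemma cross (R : realType) (fp cm cn chi Fyk Fy0 Fx yk y0 xk X Cb Smj Snj Shi Slo Smi Smii : R) :
  0 < y0 -> y0 <= yk -> 0 < xk -> xk <= X -> 2 * Cb * X < y0 ->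
  `|Smi| <= Cb -> `|Smii| <= Cb ->
  Fyk <= cm + Smj * yk -> cn + Snj * yk = Fyk ->
  Fy0 <= cn + Snj * y0 -> chi + Shi * y0 = Fy0 -> fp <= chi ->
  Slo + 1 <= Shi -> Snj <= Slo ->
  cm + Smii * xk = Fx -> Fx <= fp + Smi * xk ->
  Snj < Smj.
Proof.
move=> y00 y0k xk0 xkX CX N1 N2 A1 A2 B1 B2 B3 B4 B5 C1 C2.
rewrite ltNge; apply/negP => H.
have h1 := ler_norm Smi; have h2 := ler_norm (- Smii); rewrite normrN in h2.
have Cb0 : 0 <= Cb by apply: le_trans N1; exact: normr_ge0.
have P1 : 0 <= (Snj - Smj) * yk by apply: mulr_ge0; lra.
have P2 : 0 <= (Shi - Snj - 1) * y0 by apply: mulr_ge0; lra.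
have P3 : 0 <= (2 * Cb - (Smi - Smii)) * xk by apply: mulr_ge0; lra.
have P4 : 0 <= Cb * (X - xk) by apply: mulr_ge0; lra.
nra.
Qed.

Lemma frac_bd (R : realType) (Z : R) (k N : nat) : 0 < Z -> (k < N)%N ->
  0 < Z * k.+1%:R / N.+1%:R /\ Z * k.+1%:R / N.+1%:R < Z.
Proof.
move=> Z0 kN; split; first by rewrite divr_gt0 ?mulr_gt0 ?ltr0n.
rewrite ltr_pdivrMr ?ltr0n // ltr_pM2l // ltr_nat; by [].
Qed.

Lemma frac_mono (R : realType) (Z : R) (k k' N : nat) : 0 < Z -> (k < k')%N ->
  Z * k.+1%:R / N.+1%:R < Z * k'.+1%:R / N.+1%:R.
Proof.
by move=> Z0 kk; rewrite ltr_pM2r ?invr_gt0 ?ltr0n // ltr_pM2l // ltr_nat ltnS.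
Qed.

Lemma aux1 (k r : nat) : (k < r)%N -> (r - k.+1 < r)%N.
Proof. lia. Qed.
Lemma aux2 (k k' r : nat) : (k < r)%N -> (k' < r)%N -> (k < k')%N -> (r - k'.+1 < r - k.+1)%N.
Proof. lia. Qed.

Theorem mainTheorem11 (R : realType) (G : mgraph R)
    (D : divisor G) (S : tfun G -> Prop) (r : nat)
    (p : gpt G) (d : nat) (eta : 'I_d -> dir G) :
  tls D S r ->
  valid p ->
  (2 <= d)%N ->
  injective eta ->
  (forall i, tdir p (eta i)) ->
  (forall e, tdir p e -> exists i, eta i = e) ->
  P2' (local_array S r p eta).
Proof.
move=> [[l Hl] [n [g [gS Sg]]] RD rank dep] vp d2 inj tdp surj.
have gsl : forall km : 'I_d * 'I_n.+1, exists s : int, has_slope (g km.2) p (eta km.1) s.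
  move=> [k m] /=; have [_ Hd] := RD _ (gS m); have [K [s [Hs _]] _] := Hd p vp.
  by exists (s (eta k)); apply: Hs.
have [sg2 Hsg2] := boolp.choice gsl.
pose sg k m := sg2 (k, m).
have Hgs : forall k m, has_slope (g m) p (eta k) (sg k m) by move=> k m; exact: (Hsg2 (k, m)).
have : exists e : R, 0 < e /\ forall km : 'I_d * 'I_n.+1, e <= dist p (eta km.1) /\
    forall h, 0 < h -> h < e -> Phi p (g km.2) (eta km.1) h = g km.2 p + (sg2 km)%:~R * h.
  apply: fin_eps.
  - move=> [k m]; have [e1 e1p H] := slope_p (Hgs k m).
    exists (Order.min e1 (dist p (eta k))); split; first by rewrite lt_min e1p (dist_gt0 vp (tdp k)).
    split; first by rewrite ge_min lexx orbT.
    by move=> h h0; rewrite lt_min => /andP [h1 _]; rewrite /= H // (Phi0 vp (tdp k)).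
  - move=> km e e' [H1 H2] e'0 e'e; split; first exact: le_trans e'e H1.
    by move=> h h0 h1; apply: H2 => //; exact: lt_le_trans h1 e'e.
move=> [eps [e0 Heps]].
have edist k : eps <= dist p (eta k) by exact: (Heps (k, ord0)).1.
have Hg k m h : 0 < h -> h < eps -> Phi p (g m) (eta k) h = g m p + (sg k m)%:~R * h.
  exact: (Heps (k, m)).2.
have inVf k s (f : tfun G) : S f -> has_slope f p (eta k) s -> s \in V n (sg k).
  move=> Sf hs.
  apply/(@slopesetV R G p vp n g (eta k) (sg k) eps (tdp k) e0 (edist k) (Hg k) S Sg gS (Hgs k)).
  by exists f.
have idxle k s : s \in V n (sg k) -> (idx n (sg k) s <= r)%N.
  exact: (@idx_le R G p vp n g (eta k) (sg k) eps (tdp k) e0 (edist k) (Hg k) S r gS dep).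
pose vec (sl : 'I_d -> int) : 'I_d -> 'I_r.+1 := fun k => inord (idx n (sg k) (sl k)).
have vecM f sl : S f -> (forall k, has_slope f p (eta k) (sl k)) -> local_array S r p eta (vec sl).
  move=> Sf Hsl; exists f => // k; exists (sl k) => //.
  rewrite /vec inordK ?ltnS ?(idxle k) ?(inVf k _ f) //.
  apply: (@kth_lem R G p vp n g (eta k) (sg k) eps (tdp k) e0 (edist k) (Hg k) S Sg gS (Hgs k)).
  exact: (inVf k _ f).
have vec_lt k (sl sl' : 'I_d -> int) : sl k \in V n (sg k) -> sl' k \in V n (sg k) ->
    (sl k < sl' k)%R -> (vec sl k < vec sl' k)%N.
  move=> sV sV2 ss2; rewrite /vec !inordK ?ltnS ?idxle //.
  exact: idx_lt.
have gV k m : sg k m \in V n (sg k) by apply: inV.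
move=> i j ij ri rj rirj.
have [si [si0 Hsi]] := safe _ _ p l (eta i).
have [sj [sj0 Hsj]] := safe _ _ p l (eta j).
pose Cb := \sum_(m < n.+1) `|(sg i m)%:~R : R|.
have Cb_ge m : `|(sg i m)%:~R : R| <= Cb.
  by rewrite /Cb (bigD1 m) //= ler_wpDr // sumr_ge0 // => k _; exact: normr_ge0.
have Cb0 : 0 <= Cb by apply: sumr_ge0 => k _; exact: normr_ge0.
pose Y := Order.min eps sj / 2.
have hY : 0 < Y /\ Y < eps /\ Y < sj.
  have m1 : Order.min eps sj <= eps by rewrite ge_min lexx.
  have m2 : Order.min eps sj <= sj by rewrite ge_min lexx orbT.
  have m0 : 0 < Order.min eps sj by rewrite lt_min e0 sj0.
  rewrite /Y; split; [lra|split; lra].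
pose y (k : nat) := Y * k.+1%:R / rj.+1%:R.
pose y1 := y 0%N.
have hy k : (k < rj)%N -> 0 < y k /\ y k < Y by move=> krj; apply: frac_bd; [case: hY|].
have hymono k k' : (k < k')%N -> y k < y k' by move=> kk; apply: frac_mono; [case: hY|].
have hy1 : 0 < y1.
  by rewrite /y1 /y; apply: divr_gt0; [apply: mulr_gt0; [case: hY|rewrite ltr0n]|rewrite ltr0n].
pose X := Order.min (Order.min eps si) (y1 / (2 * Cb + 1)) / 2.
have hX : 0 < X /\ X < eps /\ X < si /\ 2 * Cb * X < y1.
  have q1 : 0 < y1 / (2 * Cb + 1) by rewrite divr_gt0 //; lra.
  have q2 : 0 < Order.min (Order.min eps si) (y1 / (2 * Cb + 1)) by rewrite !lt_min e0 si0 q1.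
  have q3 : Order.min (Order.min eps si) (y1 / (2 * Cb + 1)) <= Order.min eps si by rewrite ge_min lexx.
  have q4 : Order.min (Order.min eps si) (y1 / (2 * Cb + 1)) <= y1 / (2 * Cb + 1) by rewrite ge_min lexx orbT.
  have q5 : Order.min eps si <= eps by rewrite ge_min lexx.
  have q6 : Order.min eps si <= si by rewrite ge_min lexx orbT.
  have q7 : y1 / (2 * Cb + 1) * (2 * Cb + 1) = y1 by rewrite mulfVK //; apply: lt0r_neq0; lra.
  rewrite /X; split; [lra|split; [lra|split; [lra|]]].
  nra.
pose x (k : nat) := X * k.+1%:R / ri.+1%:R.
have hx k : (k < ri)%N -> 0 < x k /\ x k < X by move=> kri; apply: frac_bd; [case: hX|].
have hxmono k k' : (k < k')%N -> x k < x k' by move=> kk; apply: frac_mono; [case: hX|].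
pose ps (t : 'I_r) : gpt G :=
  if (t < ri)%N then ptd p (eta i) (x t) else ptd p (eta j) (y (t - ri)%N).
have rle : (ri <= r)%N by rewrite -rirj leq_addr.
have vpi h : 0 < h -> h < eps -> valid (ptd p (eta i) h).
  move=> h0 h1; apply: (ptd_valid vp (tdp i) h0); exact: lt_le_trans h1 (edist i).
have vpj h : 0 < h -> h < eps -> valid (ptd p (eta j) h).
  move=> h0 h1; apply: (ptd_valid vp (tdp j) h0); exact: lt_le_trans h1 (edist j).
have vps : forall t, valid (ps t).
  move=> t; rewrite /ps; case: ifP => tri.
    have [x0 x1] := hx _ tri; apply: vpi => //; case: hX => _ [? _]; lra.
  have trj : (t - ri < rj)%N.
    by rewrite ltn_subLR ?rirj // leqNgt tri.
  have [y0 y1'] := hy _ trj; apply: vpj => //; case: hY => _ [? _]; lra.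
have [f Sf Hf] := rank ps vps.
have [a ag] := (Sg f).1 Sf.
have [_ HdF] := RD f Sf; have [K0 [sF [HsF _]] _] := HdF p vp.
pose slf k := sF (eta k).
have Hslf k : has_slope f p (eta k) (slf k) by apply: HsF.
have [mi [Emi Smi]] := slope_gen vp (tdp i) e0 (edist i) (Hg i) ag (Hslf i).
have [mj [Emj Smj]] := slope_gen vp (tdp j) e0 (edist j) (Hg j) ag (Hslf j).
have dropP (k0 : 'I_d) (sf : R) (h : R) :
    (forall h, 0 < h -> h < sf -> ptd p (eta k0) h \notin l) ->
    0 < h -> h < eps -> h < sf -> (exists t, ps t = ptd p (eta k0) h) ->
    exists lo hi, [/\ g lo p + a lo + (sg k0 lo)%:~R * h = Phi p f (eta k0) h,
                    g hi p + a hi + (sg k0 hi)%:~R * h = Phi p f (eta k0) h &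
                    (sg k0 lo + 1 <= sg k0 hi)%R].
  move=> Hsf h0 h1 h2 [t Et].
  have vq : valid (ptd p (eta k0) h).
    apply: (ptd_valid vp (tdp k0) h0); exact: lt_le_trans h1 (edist k0).
  have [K hK Hle] := Hf _ vq.
  have Dq : D (ptd p (eta k0) h) = 0.
    apply/eqP; apply: contraNT (Hsf h h0 h2); exact: Hl.
  have m1 : (1 <= mult ps (ptd p (eta k0) h))%N.
    by rewrite /mult (bigD1 t) //= Et eqxx.
  have HK : (1 <= K)%R.
    move: Hle; rewrite Dq add0r => H; apply: le_trans H; by rewrite lez_nat.
  exact: (drop vp (tdp k0) e0 (edist k0) (Hg k0) ag h0 h1 hK HK).
have loi_ex : forall k : nat, exists m : 'I_n.+1, (k < ri)%N ->
    g m p + a m + (sg i m)%:~R * x k = Phi p f (eta i) (x k) /\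
    exists hi, g hi p + a hi + (sg i hi)%:~R * x k = Phi p f (eta i) (x k) /\
               (sg i m + 1 <= sg i hi)%R.
  move=> k; case: (ltnP k ri) => kri; last by exists ord0.
  have [x0 x1] := hx _ kri.
  have kr : (k < r)%N by exact: leq_trans kri rle.
  have [|||lo [hi [E1 E2 E3]]] := dropP i si (x k) Hsi x0.
  - by case: hX => _ [? _]; lra.
  - by case: hX => _ [_ [? _]]; lra.
  - by exists (Ordinal kr); rewrite /ps /= kri.
  by exists lo => _; split => //; exists hi.
have loj_ex : forall k : nat, exists m : 'I_n.+1, (k < rj)%N ->
    g m p + a m + (sg j m)%:~R * y k = Phi p f (eta j) (y k) /\
    exists hi, g hi p + a hi + (sg j hi)%:~R * y k = Phi p f (eta j) (y k) /\
               (sg j m + 1 <= sg j hi)%R.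
  move=> k; case: (ltnP k rj) => krj; last by exists ord0.
  have [y0 y1'] := hy _ krj.
  have kr : (ri + k < r)%N by rewrite -rirj ltn_add2l.
  have [|||lo [hi [E1 E2 E3]]] := dropP j sj (y k) Hsj y0.
  - by case: hY => _ [? _]; lra.
  - by case: hY => _ [_ ?]; lra.
  - by exists (Ordinal kr); rewrite /ps /= ltnNge leq_addr /= addKn.
  by exists lo => _; split => //; exists hi.
have [loi Hloi] := boolp.choice loi_ex.
have [loj Hloj] := boolp.choice loj_ex.
have RepI := Rep vp (tdp i) (edist i) (Hg i) ag.
have RepJ := Rep vp (tdp j) (edist j) (Hg j) ag.
have P0i : Phi p f (eta i) 0 = f p by apply: Phi0.
have P0j : Phi p f (eta j) 0 = f p by apply: Phi0.
have i1 (u v : int) : (u + 1 <= v)%R -> (u%:~R + 1 <= v%:~R :> R).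
  by move=> H; rewrite -(ler_int R) intrD in H.
have xe k : (k < ri)%N -> x k < eps by move=> kri; have [_ ?] := hx _ kri; case: hX => _ [? _]; lra.
have ye k : (k < rj)%N -> y k < eps by move=> krj; have [_ ?] := hy _ krj; case: hY => _ [? _]; lra.
have F1i k : (k < ri)%N -> (sg i (loi k) < slf i)%R.
  move=> kri; have [E1 [hi [E2 E3]]] := Hloi k kri; have [x0 x1] := hx _ kri.
  rewrite -Smi -(ltr_int R).
  apply: (@ord_lo R 0 (x k) (g mi p + a mi) _ (g hi p + a hi) (Phi p f (eta i) 0) (Phi p f (eta i) (x k)) _ _ _ x0 _ _ E1 E2 (i1 _ _ E3)).
  - by rewrite mulr0 addr0 Emi P0i.
  - exact: (RepI 0 (lexx 0) e0).1.
  - exact: (RepI (x k) (ltW x0) (xe k kri)).1.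
have F1j k : (k < rj)%N -> (sg j (loj k) < slf j)%R.
  move=> krj; have [E1 [hi [E2 E3]]] := Hloj k krj; have [y0 y1'] := hy _ krj.
  rewrite -Smj -(ltr_int R).
  apply: (@ord_lo R 0 (y k) (g mj p + a mj) _ (g hi p + a hi) (Phi p f (eta j) 0) (Phi p f (eta j) (y k)) _ _ _ y0 _ _ E1 E2 (i1 _ _ E3)).
  - by rewrite mulr0 addr0 Emj P0j.
  - exact: (RepJ 0 (lexx 0) e0).1.
  - exact: (RepJ (y k) (ltW y0) (ye k krj)).1.
have F2i k k' : (k < k')%N -> (k' < ri)%N -> (sg i (loi k') < sg i (loi k))%R.
  move=> kk kri; have kri' : (k < ri)%N by exact: ltn_trans kk kri.
  have [E1 _] := Hloi k kri'; have [E1' [hi [E2 E3]]] := Hloi k' kri.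
  have [x0 _] := hx _ kri'; have [x0' _] := hx _ kri.
  rewrite -(ltr_int R).
  apply: (@ord_lo R (x k) (x k') _ _ (g hi p + a hi) (Phi p f (eta i) (x k)) (Phi p f (eta i) (x k')) _ _ _ (hxmono _ _ kk) E1 _ E1' E2 (i1 _ _ E3)).
  - exact: (RepI (x k) (ltW x0) (xe k kri')).1.
  - exact: (RepI (x k') (ltW x0') (xe k' kri)).1.
have F2j k k' : (k < k')%N -> (k' < rj)%N -> (sg j (loj k') < sg j (loj k))%R.
  move=> kk krj; have krj' : (k < rj)%N by exact: ltn_trans kk krj.
  have [E1 _] := Hloj k krj'; have [E1' [hi [E2 E3]]] := Hloj k' krj.
  have [y0 _] := hy _ krj'; have [y0' _] := hy _ krj.
  rewrite -(ltr_int R).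
  apply: (@ord_lo R (y k) (y k') _ _ (g hi p + a hi) (Phi p f (eta j) (y k)) (Phi p f (eta j) (y k')) _ _ _ (hymono _ _ kk) E1 _ E1' E2 (i1 _ _ E3)).
  - exact: (RepJ (y k) (ltW y0) (ye k krj')).1.
  - exact: (RepJ (y k') (ltW y0') (ye k' krj)).1.
have F3 k k' : (k < rj)%N -> (k' < ri)%N -> (sg j (loj k) < sg j (loi k'))%R.
  move=> krj kri; have rj0 : (0 < rj)%N by exact: leq_ltn_trans (leq0n k) krj.
  have [A2 _] := Hloj k krj; have [_ [hi0 [B2 B4]]] := Hloj 0%N rj0.
  have [C1 _] := Hloi k' kri.
  have [x0 x1] := hx _ kri; have [yk0 _] := hy _ krj.
  rewrite -(ltr_int R).
  apply: (@cross R (f p) (g (loi k') p + a (loi k')) (g (loj k) p + a (loj k)) (g hi0 p + a hi0)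
     (Phi p f (eta j) (y k)) (Phi p f (eta j) (y 0%N)) (Phi p f (eta i) (x k')) (y k) (y 0%N) (x k') X Cb
     _ _ _ (sg j (loj 0%N))%:~R (sg i mi)%:~R (sg i (loi k'))%:~R hy1 _ x0 (ltW x1) _ (Cb_ge mi) (Cb_ge _)
     _ A2 _ B2 _ (i1 _ _ B4) _ C1 _).
  - case: k krj {A2 yk0} => [|k] krj; first by rewrite lexx.
    by apply: ltW; apply: hymono.
  - by case: hX => _ [_ [_ ?]].
  - exact: (RepJ (y k) (ltW yk0) (ye k krj)).1.
  - exact: (RepJ (y 0%N) (ltW hy1) (ye 0%N rj0)).1.
  - by have := (RepJ 0 (lexx 0) e0).1 hi0; rewrite P0j mulr0 addr0.
  - rewrite ler_int; case: k krj {A2 yk0} => [|k] krj; first by rewrite lexx.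
    by apply: ltW; apply: F2j.
  - by have := (RepI (x k') (ltW x0) (xe k' kri)).1 mi; rewrite Emi.
exists (vec slf), (fun k => vec (fun t => sg t (loi (ri - k.+1)%N))),
  (fun k => vec (fun t => sg t (loj (rj - k.+1)%N))).
split.
- split; first exact: vecM f slf Sf Hslf.
  by split => k; apply: (vecM (g _)) => // t; apply: Hgs.
- split.
  + move=> k k' kk; apply: (vec_lt i (fun t => sg t (loi (ri - k.+1)%N)) (fun t => sg t (loi (ri - k'.+1)%N))) => //=.
    by apply: F2i; [apply: aux2|apply: aux1].
  + move=> k; apply: (vec_lt i (fun t => sg t (loi (ri - k.+1)%N)) slf) => //=.
    * exact: (inVf i _ f Sf (Hslf i)).
    * by apply: F1i; apply: aux1.
- split.
  + move=> k k' kk; apply: (vec_lt j (fun t => sg t (loj (rj - k.+1)%N)) (fun t => sg t (loj (rj - k'.+1)%N))) => //=.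
    by apply: F2j; [apply: aux2|apply: aux1].
  + move=> k; apply: (vec_lt j (fun t => sg t (loj (rj - k.+1)%N)) slf) => //=.
    * exact: (inVf j _ f Sf (Hslf j)).
    * by apply: F1j; apply: aux1.
- move=> k k'; apply: (vec_lt j (fun t => sg t (loj (rj - k.+1)%N)) (fun t => sg t (loi (ri - k'.+1)%N))) => //=.
  by apply: F3; apply: aux1.
Qed.
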